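(* Let $(A,\to,1)$ be an algebra of type $(2,0)$. Then: (a) (Re), (L), (Ex) and ( ** ) imply (p-2); (b) (Ex), (B), ( * ) and (pi) imply (p-1); (c) (p-1), (p-2) and (An) imply (pimpl); (d) (Re), (Ex), (B), ( ** ), ( * ), (L), (An) and (pi) together imply (pimpl).
   Context: Properties, required for all $x,y,z\in A$: (Re) $x\to x=1$; (L) $x\to 1=1$; (Ex) $x\to(y\to z)=y\to(x\to z)$; (B) $(y\to z)\to((x\to y)\to(x\to z))=1$; ( * ) $y\to z=1$ implies $(x\to y)\to(x\to z)=1$; ( ** ) $y\to z=1$ implies $(z\to x)\to(y\to x)=1$; (An) $x\to y=1$ and $y\to x=1$ imply $x=y$; (pimpl) $x\to(y\to z)=(x\to y)\to(x\to z)$; (pi) $y\to(y\to x)=y\to x$; (p-1) $(x\to(y\to z))\to((x\to y)\to(x\to z))=1$; (p-2) $((x\to y)\to(x\to z))\to(x\to(y\to z))=1$. *)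

(* Defs.v *)
Section Props.
Variables (A : Type) (imp : A -> A -> A) (one : A).
Local Infix "→" := imp (at level 55, right associativity).

Definition P_Re : Prop := forall x : A, x → x = one.
Definition P_L : Prop := forall x : A, x → one = one.
Definition P_Ex : Prop := forall x y z : A, x → (y → z) = y → (x → z).
Definition P_B : Prop :=
  forall x y z : A, (y → z) → ((x → y) → (x → z)) = one.
Definition P_star : Prop :=
  forall x y z : A, y → z = one -> (x → y) → (x → z) = one.
Definition P_starstar : Prop :=
  forall x y z : A, y → z = one -> (z → x) → (y → x) = one.
Definition P_An : Prop :=
  forall x y : A, x → y = one -> y → x = one -> x = y.
Definition P_pimpl : Prop :=
  forall x y z : A, x → (y → z) = (x → y) → (x → z).
Definition P_pi : Prop := forall x y : A, y → (y → x) = y → x.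
Definition P_p1 : Prop :=
  forall x y z : A, (x → (y → z)) → ((x → y) → (x → z)) = one.
Definition P_p2 : Prop :=
  forall x y z : A, ((x → y) → (x → z)) → (x → (y → z)) = one.

End Props.

Arguments P_Re {A}. Arguments P_L {A}. Arguments P_Ex {A}. Arguments P_B {A}.
Arguments P_star {A}. Arguments P_starstar {A}. Arguments P_An {A}.
Arguments P_pimpl {A}. Arguments P_pi {A}. Arguments P_p1 {A}. Arguments P_p2 {A}.

(* Main.v *)
Require Import Defs.

Theorem proposition6p3 (A : Type) (imp : A -> A -> A) (one : A) :
  (P_Re imp one -> P_L imp one -> P_Ex imp -> P_starstar imp one ->
     P_p2 imp one) /\
  (P_Ex imp -> P_B imp one -> P_star imp one -> P_pi imp ->
     P_p1 imp one) /\
  (P_p1 imp one -> P_p2 imp one -> P_An imp one -> P_pimpl imp) /\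
  (P_Re imp one -> P_Ex imp -> P_B imp one -> P_starstar imp one ->
     P_star imp one -> P_L imp one -> P_An imp one -> P_pi imp ->
     P_pimpl imp).
Proof.
  assert (Ha : P_Re imp one -> P_L imp one -> P_Ex imp -> P_starstar imp one ->
     P_p2 imp one).
  { intros Re L Ex SS x y z.
    rewrite (Ex x y z).
    apply SS.
    rewrite Ex, Re, L. reflexivity. }
  assert (Hb : P_Ex imp -> P_B imp one -> P_star imp one -> P_pi imp ->
     P_p1 imp one).
  { intros Ex B S Pi x y z.
    pose proof (S x _ _ (B x y z)) as H.
    rewrite (Ex x (imp x y) (imp x z)), Pi in H. exact H. }
  assert (Hc : P_p1 imp one -> P_p2 imp one -> P_An imp one -> P_pimpl imp).
  { intros P1 P2 An x y z. apply An; [apply P1 | apply P2]. }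
  split; [exact Ha|split; [exact Hb|split; [exact Hc|]]].
  intros Re Ex B SS S L An Pi. apply Hc; auto.
Qed.
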